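(* Let $\Omega\subset\mathbb{R}^{n+1}$ be a compact convex body with $C^1$ boundary. Fix $X_0\in\partial\Omega$, let $X\in\partial\Omega$ and $\bar X_0,\bar X_1\in\partial\Omega^+(X_0)$, and let $(\bar X_t)_{t\in[0,1]}$ be the $c$-segment with respect to $X_0$ from $\bar X_0$ to $\bar X_1$. Then for all $t\in[0,1]$, $$-c(X,\bar X_t)+c(X_0,\bar X_t)+c(X,\bar X_0)-c(X_0,\bar X_0)\le t\big(-c(X,\bar X_1)+c(X_0,\bar X_1)+c(X,\bar X_0)-c(X_0,\bar X_0)\big).$$
   Context: $c(X,Y)=\frac{|X-Y|^2}{2}$. $\mathcal{N}_\Omega$ is the outward unit normal; $\partial\Omega^+(X_0):=\{X\in\partial\Omega\mid\langle\mathcal{N}_\Omega(X),\mathcal{N}_\Omega(X_0)\rangle>0\}$. Let $P_{X_0}$ be the orthogonal projection of $\mathbb{R}^{n+1}$ onto the tangent hyperplane $\Pi_{X_0}$ to $\partial\Omega$ at $X_0$; $P_{X_0}$ is injective on $\partial\Omega^+(X_0)$ and $\Omega_{X_0}:=P_{X_0}(\partial\Omega^+(X_0))$ is convex. The $c$-segment with respect to $X_0$ from $\bar X_0$ to $\bar X_1$ is the curve $t\mapsto\bar X_t$, where $\bar X_t$ is the unique point of $\partial\Omega^+(X_0)$ with $P_{X_0}(\bar X_t)=(1-t)P_{X_0}(\bar X_0)+tP_{X_0}(\bar X_1)$. *)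

(* Defs.v *)
From HB Require Import structures.
From mathcomp Require Import all_boot all_order all_algebra.
From mathcomp Require Import all_classical all_reals all_analysis.
Set Implicit Arguments. Unset Strict Implicit. Unset Printing Implicit Defensive.
Import Order.TTheory GRing.Theory Num.Theory.
Import numFieldNormedType.Exports.
Local Open Scope classical_set_scope.
Local Open Scope ring_scope.

Section Defs.
Variables (R : realType) (n : nat).
Notation V := 'rV[R]_(n.+1).

Definition dotp (u v : V) : R := \sum_(i < n.+1) u ord0 i * v ord0 i.

Definition cost (X Y : V) : R := dotp (X - Y) (X - Y) / 2.

Definition convex_setV (A : set V) : Prop :=
  forall x y t, A x -> A y -> 0 <= t <= 1 -> A ((1 - t) *: x + t *: y).

Definition convex_body (A : set V) : Prop :=
  compact A /\ convex_setV A /\ interior A !=set0.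

Definition bdry (A : set V) : set V := closure A `\` interior A.

(* C^1 boundary: A is the sublevel set {rho <= 0} of a C^1 function rho whose
   differential does not vanish on {rho = 0} (global defining function). *)
Definition C1_boundary (A : set V) : Prop :=
  exists rho : V -> R,
    (forall x, differentiable rho x) /\
    (forall h : V, continuous (fun x => 'd rho x h)) /\
    A = [set x | rho x <= 0] /\
    (forall x, rho x = 0 -> exists h : V, 'd rho x h != 0).

(* nu is the outward unit normal of the convex body A at X (unit normal of a
   supporting hyperplane at X, pointing away from A). *)
Definition outward_unit_normal (A : set V) (X nu : V) : Prop :=
  dotp nu nu = 1 /\ forall Y, A Y -> dotp nu (Y - X) <= 0.

Definition bdry_plus (A : set V) (N : V -> V) (X0 : V) : set V :=
  [set X | bdry A X /\ 0 < dotp (N X) (N X0)].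

Definition proj_tan (N : V -> V) (X0 Y : V) : V :=
  Y - (dotp (Y - X0) (N X0)) *: N X0.

(* Xb is (a parametrization of) the c-segment wrt X0 from Xb0 to Xb1:
   for every t in [0,1], Xb t is a point of dOmega^+(X0) whose projection is
   (1-t) P(Xb0) + t P(Xb1) (such a point is unique by injectivity of P). *)
Definition c_segment (A : set V) (N : V -> V) (X0 Xb0 Xb1 : V) (Xb : R -> V)
  : Prop :=
  forall t, 0 <= t <= 1 ->
    bdry_plus A N X0 (Xb t) /\
    proj_tan N X0 (Xb t) =
      (1 - t) *: proj_tan N X0 Xb0 + t *: proj_tan N X0 Xb1.

End Defs.

(* Main.v *)
Require Import Defs.
From HB Require Import structures.
From mathcomp Require Import all_boot all_order all_algebra.
From mathcomp Require Import all_classical all_reals all_analysis.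
From mathcomp Require Import lra.
Import Order.TTheory GRing.Theory Num.Theory.
Import numFieldNormedType.Exports.
Local Open Scope classical_set_scope.
Local Open Scope ring_scope.

Section Aux.
Variables (R : realType) (n : nat).
Implicit Types (u v w : 'rV[R]_(n.+1)).

Lemma dotpDl u v w : dotp (u + v) w = dotp u w + dotp v w.
Proof. by rewrite /dotp -big_split; apply: eq_bigr => i _; rewrite mxE mulrDl. Qed.
Lemma dotpZl a u w : dotp (a *: u) w = a * dotp u w.
Proof. by rewrite /dotp mulr_sumr; apply: eq_bigr => i _; rewrite mxE mulrA. Qed.
Lemma dotpNl u w : dotp (- u) w = - dotp u w.
Proof. by rewrite -scaleN1r dotpZl mulN1r. Qed.
Lemma dotpBl u v w : dotp (u - v) w = dotp u w - dotp v w.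
Proof. by rewrite dotpDl dotpNl. Qed.
Lemma dotpC u v : dotp u v = dotp v u.
Proof. by rewrite /dotp; apply: eq_bigr => i _; rewrite mulrC. Qed.
Lemma dotpBr u v w : dotp w (u - v) = dotp w u - dotp w v.
Proof. by rewrite dotpC dotpBl !(dotpC w). Qed.
Lemma costE u v : cost u v = (dotp u u - 2 * dotp u v + dotp v v) / 2.
Proof.
rewrite /cost dotpBl !dotpBr (dotpC v u); congr (_ / _); lra.
Qed.
End Aux.
Arguments dotpDl {R n}. Arguments dotpZl {R n}. Arguments dotpNl {R n}. Arguments dotpBl {R n}. Arguments dotpC {R n}. Arguments dotpBr {R n}. Arguments costE {R n}.

Theorem proposition3p4 (R : realType) (n : nat) (Omega : set 'rV[R]_(n.+1))
  (N : 'rV[R]_(n.+1) -> 'rV[R]_(n.+1))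
  (hbody : convex_body Omega) (hC1 : C1_boundary Omega)
  (hN : forall X, bdry Omega X -> outward_unit_normal Omega X (N X))
  (X0 X Xb0 Xb1 : 'rV[R]_(n.+1)) (Xb : R -> 'rV[R]_(n.+1))
  (hX0 : bdry Omega X0) (hX : bdry Omega X)
  (hXb0 : bdry_plus Omega N X0 Xb0) (hXb1 : bdry_plus Omega N X0 Xb1)
  (hseg : c_segment Omega N X0 Xb0 Xb1 Xb) :
  forall t : R, 0 <= t <= 1 ->
    - cost X (Xb t) + cost X0 (Xb t) + cost X Xb0 - cost X0 Xb0
    <= t * (- cost X Xb1 + cost X0 Xb1 + cost X Xb0 - cost X0 Xb0).
Proof.
move=> t ht.
have [hcomp [hconv _]] := hbody.
have hcl : closure Omega = Omega.
  have hc : closed Omega := compact_closed (@norm_hausdorff _ _) hcomp.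
  by move/closure_id: hc => <-.
have inO : forall Y, bdry Omega Y -> Omega Y.
  by move=> Y [+ _]; rewrite hcl.
have [[hbt hpos] hproj] := hseg t ht.
set Xt := Xb t in hbt hpos hproj *.
set N0 := N X0 in hpos hproj *.
set h := fun Y => dotp (Y - X0) N0.
have key : forall w, dotp Xt w = (1 - t) * dotp Xb0 w + t * dotp Xb1 w
   + (h Xt - (1 - t) * h Xb0 - t * h Xb1) * dotp N0 w.
  move=> w.
  have := congr1 (fun v => dotp v w) hproj.
  rewrite /proj_tan /= !dotpDl !dotpZl !dotpBl !dotpZl -/N0 -/(h _) -/(h Xb0) -/(h Xb1).
  rewrite /h !dotpDl ?dotpNl !dotpZl ?dotpDl ?dotpNl => E.
  rewrite ?dotpBl ?dotpDl ?dotpNl; nra.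
set s := h Xt - (1 - t) * h Xb0 - t * h Xb1 in key.
have hZ : Omega ((1 - t) *: Xb0 + t *: Xb1).
  by apply: hconv => //; [by case: hXb0 => /inO | by case: hXb1 => /inO].
have [_ hsupt] := hN _ hbt.
have := hsupt _ hZ.
rewrite dotpBr (dotpC _ Xt) key dotpC dotpDl !dotpZl !(dotpC Xb0) !(dotpC Xb1).
move=> H1.
have hs : 0 <= s.
  have : 0 <= s * dotp N0 (N Xt) by lra.
  by rewrite dotpC in hpos; rewrite pmulr_lge0.
have [_ hsup0] := hN _ hX0.
have := hsup0 _ (inO _ hX).
rewrite dotpBr -/N0 => H2.
have H3 : s * (dotp N0 X - dotp N0 X0) <= 0 by rewrite mulr_ge0_le0 // subr_le0.
rewrite !costE (dotpC X (Xb t)) (dotpC X0 (Xb t)) -/Xt !key.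
rewrite (dotpC X Xb0) (dotpC X0 Xb0) (dotpC X Xb1) (dotpC X0 Xb1).
nra.
Qed.
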